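(* Let $\Sigma=\{(x,u(x)):x\in\Omega\}$ be a smooth strictly locally convex graph in $\mathbb{H}^{n+1}$ over a bounded domain $\Omega\subset\mathbb{R}^n$, with $u\ge\epsilon$ in $\Omega$ and $u=\epsilon$ on $\partial\Omega$ for some $\epsilon>0$. Then \[ \frac{1}{\nu^{n+1}}\le\max\Big\{\frac{\max_\Omega u}{u},\ \max_{\partial\Omega}\frac{1}{\nu^{n+1}}\Big\}\quad\text{in }\Omega. \]
   Context: Half-space model $\mathbb{H}^{n+1}=\{(x,x_{n+1}):x_{n+1}>0\}$, metric $\sum dx_i^2/x_{n+1}^2$. The graph is oriented upward; strictly locally convex means all hyperbolic principal curvatures are positive, equivalently the matrix $\{\delta_{ij}+u_iu_j+uu_{ij}\}$ is positive definite. $\nu^{n+1}=1/\sqrt{1+|Du|^2}$ is the last component of the upward Euclidean unit normal. *)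

(* Defs.v *)
From HB Require Import structures.
From mathcomp Require Import all_boot all_order all_algebra.
From mathcomp Require Import all_classical all_reals all_analysis.
Set Implicit Arguments. Unset Strict Implicit. Unset Printing Implicit Defensive.
Import Order.TTheory GRing.Theory Num.Theory.
Import numFieldNormedType.Exports.
Local Open Scope classical_set_scope.
Local Open Scope ring_scope.

Section Defs.
Variables (R : realType) (n : nat).
Local Notation V := ('rV[R]_n).

Definition ebasis (i : 'I_n) : V := delta_mx 0 i.

Definition partial (i : 'I_n) (f : V -> R) : V -> R :=
  fun x => derive f x (ebasis i).

Fixpoint iter_partial (l : seq 'I_n) (f : V -> R) : V -> R :=
  match l with
  | [::] => f
  | i :: l' => partial i (iter_partial l' f)
  end.

Definition smooth_on (U : set V) (f : V -> R) : Prop :=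
  forall l : seq 'I_n,
    (forall x, U x -> {for x, continuous (iter_partial l f)}) /\
    (forall x i, U x -> derivable (iter_partial l f) x (ebasis i)).

Definition bounded_domain (O : set V) : Prop :=
  O !=set0 /\ open O /\ connected O /\ exists M : R, forall x, O x -> `|x| <= M.

Definition bdry (O : set V) : set V := closure O `\` O.

Definition posdef (A : 'M[R]_n) : Prop :=
  forall v : V, v != 0 -> 0 < (v *m A *m v^T) 0 0.

Definition convexity_matrix (u : V -> R) (x : V) : 'M[R]_n :=
  \matrix_(i, j) ((i == j)%:R + partial i u x * partial j u x
                  + u x * partial i (partial j u) x).

(* strictly locally convex graph over O (hyperbolic principal curvatures > 0) *)
Definition strictly_locally_convex (O : set V) (u : V -> R) : Prop :=
  forall x, O x -> posdef (convexity_matrix u x).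

(* 1 / nu^{n+1} = sqrt(1 + |Du|^2) *)
Definition inv_nu (u : V -> R) (x : V) : R :=
  Num.sqrt (1 + \sum_i (partial i u x) ^+ 2).

End Defs.

(* Main.v *)
Require Import Defs.
From mathcomp Require Import ring lra.
Set Implicit Arguments. Unset Strict Implicit. Unset Printing Implicit Defensive.
From HB Require Import structures.
From mathcomp Require Import all_boot all_order all_algebra.
From mathcomp Require Import all_classical all_reals all_analysis.
Import Order.TTheory GRing.Theory Num.Theory.
Import numFieldNormedType.Exports.
Local Open Scope classical_set_scope.
Local Open Scope ring_scope.

Require Import Defs.
From mathcomp Require Import ring lra.
Set Implicit Arguments. Unset Strict Implicit. Unset Printing Implicit Defensive.


Lemma fermat_dir (R : realType) (V : normedModType R) (f : V -> R) (x v : V) :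
  derivable f x v -> (\forall y \near x, f y <= f x) -> 'D_v f x = 0.
Proof.
move=> df fmax.
have gc : (fun h : R => h *: v + x) @ (nbhs (0:R)) --> x.
  rewrite [X in _ --> X](_ : x = 0 *: v + x); last by rewrite scale0r add0r.
  apply: cvgD; last exact: cvg_cst.
  apply: cvgZr_tmp; exact: cvg_id.
have PP : \forall h \near (0:R), f (h *: v + x) <= f x := gc _ fmax.
apply/eqP; rewrite eq_le; apply/andP; split.
  rewrite /derive (cvg_at_rightE (fun h : R => h^-1 *: ((f \o shift x) (h *: v) - f x))) //.
  apply: limr_le.
    rewrite -(cvg_at_rightE (fun h : R => h^-1 *: ((f \o shift x) (h *: v) - f x))) //.
    apply: cvg_trans df; apply: cvg_app.
    move=> A [e egt0 Ae]; exists e => // y ye ygt0; apply: Ae => //.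
    exact/lt0r_neq0.
  rewrite /at_right /within /=; move: PP; apply: filterS => h /= Ph hgt0.
  apply: mulr_ge0_le0; first by rewrite invr_ge0 ltW.
  by rewrite subr_le0.
rewrite /derive (cvg_at_leftE (fun h : R => h^-1 *: ((f \o shift x) (h *: v) - f x))) //.
apply: limr_ge.
  rewrite -(cvg_at_leftE (fun h : R => h^-1 *: ((f \o shift x) (h *: v) - f x))) //.
  apply: cvg_trans df; apply: cvg_app.
  move=> A [e egt0 Ae]; exists e => // y ye ygt0; apply: Ae => //.
  exact/ltr0_neq0.
rewrite /at_left /within /=; move: PP; apply: filterS => h /= Ph hlt0.
apply: mulr_le0; first by rewrite invr_le0 ltW.
by rewrite subr_le0.
Qed.
Lemma compact_cl (R : realType) (n : nat) (Omega : set 'rV[R]_n) :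
  bounded_domain Omega -> compact (closure Omega).
Proof.
move=> [_ [_ [_ [M HM]]]].
apply: bounded_closed_compact; last exact: closed_closure.
have sub : closure Omega `<=` closed_ball_ Num.norm (0 : 'rV[R]_n) M.
  have -> : closed_ball_ Num.norm (0 : 'rV[R]_n) M = closure (closed_ball_ Num.norm (0 : 'rV[R]_n) M).
    by apply/closure_id; exact: closed_closed_ball_.
  apply: closureS => y /HM; rewrite /closed_ball_ /= sub0r normrN.
  done.
exists M; split; first by rewrite num_real.
move=> M' hM' y /sub; rewrite /closed_ball_ /= sub0r normrN => h.
by rewrite (le_trans h) // ltW.
Qed.
Section Aux.
Variables (R : realType) (n : nat).
Local Notation V := ('rV[R]_n).

Definition Sfun (u : V -> R) : V -> R := \sum_k (partial k u * partial k u).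
Definition Ffun (u : V -> R) : V -> R := u * u * (cst 1 + Sfun u).

Lemma SfunE u y : Sfun u y = \sum_k (partial k u y) ^+ 2.
Proof. by rewrite /Sfun fct_sumE; apply: eq_bigr => k _; rewrite expr2. Qed.

Lemma FfunE u y : Ffun u y = u y ^+ 2 * (1 + Sfun u y).
Proof. by rewrite /Ffun /= expr2. Qed.

Lemma Ffun_cont (U : set V) u y : smooth_on U u -> U y -> {for y, continuous (Ffun u)}.
Proof.
move=> Hs Uy.
have cu : {for y, continuous u} := (Hs [::]).1 y Uy.
have cp : forall k, {for y, continuous (partial k u)} := fun k => (Hs [:: k]).1 y Uy.
have cS : {for y, continuous (Sfun u)}.
  rewrite /Sfun; apply: (big_ind (fun f : V -> R => {for y, continuous f})).
  - exact: cst_continuous.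
  - by move=> f g cf cg; apply: continuousD.
  - by move=> k _; apply: continuousM.
rewrite /Ffun; apply: continuousM; first exact: continuousM.
apply: continuousD => //; exact: cst_continuous.
Qed.

End Aux.
Section Aux2.
Variables (R : realType) (n : nat).
Local Notation V := ('rV[R]_n).

Lemma Ffun_der (U : set V) u z (i : 'I_n) : smooth_on U u -> U z ->
  derivable (Ffun u) z (ebasis R i) /\
  'D_(ebasis R i) (Ffun u) z = 2 * u z * ((1 + Sfun u z) * partial i u z
     + u z * \sum_k partial k u z * partial i (partial k u) z).
Proof.
move=> Hs Uz.
have du : derivable u z (ebasis R i) := (Hs [::]).2 z i Uz.
have dp : forall k, derivable (partial k u) z (ebasis R i) := fun k => (Hs [:: k]).2 z i Uz.
have dpp : forall k, derivable (partial k u * partial k u) z (ebasis R i) := fun k => derivableM (dp k) (dp k).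
have dS : derivable (Sfun u) z (ebasis R i) by apply: derivable_sum.
have d1S : derivable (cst 1 + Sfun u) z (ebasis R i).
  exact: (derivableD (@derivable_cst R _ _ (1:R) z (ebasis R i)) dS).
have duu : derivable (u * u) z (ebasis R i) := derivableM du du.
have dc : derivable (cst (1:R)) z (ebasis R i) := @derivable_cst R _ _ (1:R) z (ebasis R i).
have D1 : 'D_(ebasis R i) (cst 1 + Sfun u) z
    = 2 * \sum_k partial k u z * partial i (partial k u) z.
  rewrite (deriveD dc dS) derive_cst add0r /Sfun (derive_sum dpp) mulr_sumr.
  apply: eq_bigr => k _; rewrite (deriveM (dp k) (dp k)).
  change (partial k u z * partial i (partial k u) z + partial k u z * partial i (partial k u) z
     = 2 * (partial k u z * partial i (partial k u) z)).
  ring.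
have D2 : 'D_(ebasis R i) (u * u) z = 2 * u z * partial i u z.
  rewrite (deriveM du du).
  change (u z * partial i u z + u z * partial i u z = 2 * u z * partial i u z).
  ring.
have dF : derivable (Ffun u) z (ebasis R i) := derivableM duu d1S.
split => //.
rewrite /Ffun (deriveM duu d1S) D1 D2.
change (u z * u z * (2 * \sum_k partial k u z * partial i (partial k u) z) +
  (1 + Sfun u z) * (2 * u z * partial i u z) =
  2 * u z * ((1 + Sfun u z) * partial i u z +
   u z * \sum_k partial k u z * partial i (partial k u) z)).
ring.
Qed.
End Aux2.
Section Aux3.
Variables (R : realType) (n : nat).
Local Notation V := ('rV[R]_n).

Lemma grad0 (u : V -> R) z : posdef (convexity_matrix u z) ->
  (forall i, (1 + Sfun u z) * partial i u z
     + u z * \sum_k partial k u z * partial i (partial k u) z = 0) ->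
  Sfun u z = 0.
Proof.
move=> pd H.
pose v : V := \row_k partial k u z.
have Av : convexity_matrix u z *m v^T = 0.
  apply/matrixP => i j; rewrite ord1 !mxE.
  rewrite -[RHS](H i) SfunE.
  under eq_bigr do rewrite !mxE !mulrDl.
  rewrite !big_split /=.
  rewrite (bigD1 i) //= eqxx mul1r big1 ?addr0; last first.
    by move=> k /negbTE; rewrite eq_sym => ->; rewrite mul0r.
  have E1 : \sum_(k < n) partial i u z * partial k u z * partial k u z
      = (\sum_(k < n) partial k u z ^+ 2) * partial i u z.
    by rewrite mulr_suml; apply: eq_bigr => k _; rewrite expr2; ring.
  have E2 : \sum_(k < n) u z * partial i (partial k u) z * partial k u z
      = u z * \sum_(k < n) partial k u z * partial i (partial k u) z.
    by rewrite mulr_sumr; apply: eq_bigr => k _; ring.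
  rewrite E1 E2; ring.
have v0 : v = 0.
  apply/eqP; apply: contraT => vn0.
  have := pd v vn0; by rewrite -mulmxA Av mulmx0 mxE ltxx.
rewrite SfunE big1 // => k _.
have : v 0 k = 0 by rewrite v0 mxE.
by rewrite mxE => ->; rewrite expr2 mul0r.
Qed.
End Aux3.
Unset Implicit Arguments.
Theorem proposition3p2 (R : realType) (n : nat) (Omega U : set 'rV[R]_n)
  (u : 'rV[R]_n -> R) (eps : R) :
  bounded_domain Omega ->
  open U -> closure Omega `<=` U -> smooth_on U u ->
  strictly_locally_convex Omega u ->
  0 < eps ->
  (forall x, Omega x -> eps <= u x) ->
  (forall x, bdry Omega x -> u x = eps) ->
  forall x, Omega x ->
    inv_nu u x <=
    Num.max (sup [set u y | y in closure Omega] / u x)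
            (sup [set inv_nu u y | y in bdry Omega]).
Proof.
move=> bd oU sKU Hs slc eps0 ueps ubd x Ox.
have oO : open Omega by case: bd => _ [].
have KOB : forall y, closure Omega y -> Omega y \/ bdry Omega y.
  move=> y Ky; have [Oy|nOy] := pselect (Omega y); [by left|by right].
have uK : forall y, closure Omega y -> eps <= u y.
  by move=> y /KOB [/ueps //| /ubd ->].
have upos : forall y, closure Omega y -> 0 < u y.
  by move=> y /uK; apply: lt_le_trans.
have Kx : closure Omega x := subset_closure Ox.
have Kne : closure Omega !=set0 by exists x.
have cK := compact_cl bd.
have cF : {within closure Omega, continuous (Ffun u)}.
  apply: continuous_in_subspaceT => y /set_mem Ky.
  exact: Ffun_cont Hs (sKU _ Ky).
have [z /set_mem Kz zmax] := EVT_max_rV Kne cK cF.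
have Wdef : forall y, inv_nu u y = Num.sqrt (1 + Sfun u y).
  by move=> y; rewrite /inv_nu SfunE.
have W1 : forall y, 1 <= inv_nu u y.
  move=> y; rewrite Wdef -{1}sqrtr1; apply: ler_wsqrtr.
  rewrite lerDl SfunE; apply: sumr_ge0 => k _; exact: sqr_ge0.
have W0 : forall y, 0 <= inv_nu u y by move=> y; apply: le_trans (W1 y).
have wF : forall y, closure Omega y -> u y * inv_nu u y = Num.sqrt (Ffun u y).
  move=> y Ky; rewrite FfunE sqrtrM ?sqr_ge0 // sqrtr_sqr ger0_norm ?Wdef //.
  exact: ltW (upos y Ky).
have wmax : forall y, closure Omega y -> u y * inv_nu u y <= u z * inv_nu u z.
  move=> y Ky; rewrite !wF //; apply: ler_wsqrtr; apply: zmax; exact/mem_set.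
have ux := upos x Kx.
case: (KOB z Kz) => [Oz|Bz].
- have Fz : forall i, (1 + Sfun u z) * partial i u z
       + u z * \sum_k partial k u z * partial i (partial k u) z = 0.
    move=> i; have [dF DF] := Ffun_der i Hs (sKU z Kz).
    have nearz : \forall y \near z, Ffun u y <= Ffun u z.
      have : nbhs z Omega by apply: open_nbhs_nbhs; split.
      apply: filterS => y Oy; apply: zmax; apply/mem_set; exact: subset_closure.
    have := fermat_dir dF nearz; rewrite DF => /eqP.
    rewrite !mulf_eq0 pnatr_eq0 /= (gt_eqF (upos z Kz)) /=.
    by move/eqP.
  have S0 := grad0 (slc z Oz) Fz.
  have Wz : inv_nu u z = 1 by rewrite Wdef S0 addr0 sqrtr1.
  have hs : has_sup [set u y | y in closure Omega].
    split; first by exists (u x), x.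
    exists (u z) => _ [y Ky <-].
    have := wmax y Ky; rewrite Wz mulr1; apply: le_trans.
    rewrite -{1}[u y]mulr1; apply: ler_wpM2l; [exact: ltW (upos y Ky)|exact: W1].
  have zs : u z <= sup [set u y | y in closure Omega].
    by apply: sup_upper_bound => //; exists z.
  rewrite le_max; apply/orP; left.
  rewrite ler_pdivlMr // mulrC; apply: le_trans zs.
  by have := wmax x Kx; rewrite Wz mulr1.
- have uz : u z = eps := ubd z Bz.
  have Wzx : inv_nu u x <= inv_nu u z.
    rewrite -(ler_pM2l ux); apply: le_trans (wmax x Kx) _.
    rewrite uz; apply: ler_wpM2r; [exact: W0|exact: uK].
  have hs : has_sup [set inv_nu u y | y in bdry Omega].
    split; first by exists (inv_nu u z), z.
    exists (inv_nu u z) => _ [y By <-].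
    rewrite -(ler_pM2l eps0); rewrite -{1}(ubd y By) -uz.
    by apply: wmax; case: By.
  have zs : inv_nu u z <= sup [set inv_nu u y | y in bdry Omega].
    by apply: sup_upper_bound => //; exists z.
  rewrite le_max; apply/orP; right.
  exact: le_trans Wzx zs.
Qed.
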